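(* Let $\nu$ be a continuous valuation on a topological space $X$ such that $\mathrm{Val}(\nu)=\{\nu(U):U\in\mathcal OX,\ \nu(U)\neq0,+\infty\}$ has a least element $r$. Then there is an irreducible closed subset $C$ of $X$ such that (1) $\nu'=\nu-r\,e_C$ is a continuous valuation, and (2) $\mathrm{Val}(\nu')\subseteq\{v-r:v\in\mathrm{Val}(\nu),\ v\neq r\}$.
   Context: A continuous valuation is a map $\nu:\mathcal OX\to[0,\infty]$ with $\nu(\emptyset)=0$, monotone, modular, preserving directed suprema of opens. A non-empty subset is irreducible if it is not contained in a union of two closed sets without being contained in one of them. For irreducible closed $C$, $e_C(U)=1$ if $U\cap C\neq\emptyset$ and $0$ otherwise. The difference $\nu-r\,e_C$ is pointwise, with $+\infty-r=+\infty$. *)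

(* Defs.v *)
From HB Require Import structures.
From mathcomp Require Import all_boot all_order all_algebra.
From mathcomp Require Import all_classical all_reals all_analysis.
Set Implicit Arguments. Unset Strict Implicit. Unset Printing Implicit Defensive.
Import Order.TTheory GRing.Theory Num.Theory.
Local Open Scope classical_set_scope.
Local Open Scope ereal_scope.

Section Defs.
Variables (R : realType) (T : topologicalType).

Definition directed_opens (F : set (set T)) : Prop :=
  (F `<=` open) /\ F !=set0 /\
  (forall U V, F U -> F V -> exists2 W, F W & U `|` V `<=` W).

(* Continuous valuation nu : O(X) -> [0, +oo]; only its values on opens matter. *)
Definition continuous_valuation (nu : set T -> \bar R) : Prop :=
  [/\ nu set0 = 0,
      (forall U, open U -> 0 <= nu U),
      (forall U V, open U -> open V -> U `<=` V -> nu U <= nu V),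
      (forall U V, open U -> open V -> nu U + nu V = nu (U `|` V) + nu (U `&` V))
    & (forall F, directed_opens F ->
         nu (\bigcup_(U in F) U) = ereal_sup [set nu U | U in F])].

Definition Val (nu : set T -> \bar R) : set (\bar R) :=
  [set v | exists2 U, open U & [/\ nu U = v, v != 0 & v != +oo]].

Definition irreducible (C : set T) : Prop :=
  C !=set0 /\
  (forall A B, closed A -> closed B -> C `<=` A `|` B -> C `<=` A \/ C `<=` B).

Definition e_pt (C : set T) (U : set T) : \bar R :=
  if pselect (U `&` C !=set0) then 1 else 0.

Definition val_sub (nu : set T -> \bar R) (r : \bar R) (C : set T) : set T -> \bar R :=
  fun U => nu U - r * e_pt C U.

End Defs.

(* Main.v *)
Require Import Defs.
From HB Require Import structures.
From mathcomp Require Import all_boot all_order all_algebra.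
From mathcomp Require Import all_classical all_reals all_analysis.
From mathcomp Require Import lra.
Import Order.TTheory GRing.Theory Num.Theory.
Local Open Scope classical_set_scope.
Local Open Scope ereal_scope.

Theorem lemma4p2 (R : realType) (T : topologicalType) (nu : set T -> \bar R)
    (r : \bar R) :
  continuous_valuation nu ->
  Val nu r -> (forall v, Val nu v -> r <= v) ->
  exists C : set T,
    [/\ closed C, irreducible C,
        continuous_valuation (val_sub nu r C)
      & Val (val_sub nu r C) `<=` [set v - r | v in [set v | Val nu v /\ v != r]]].
Proof.
move=> [nu0 nuge0 numono numod nucont] Vr rmin.
have r_ge0 : 0 <= r by case: Vr => U oU [<- _ _]; exact: nuge0.
move: Vr rmin; case: r r_ge0 => [r| |] r_ge0 Vr rmin; last 2 first.
- by case: Vr => ? ? [].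
- by move: r_ge0; rewrite leeNy_eq.
case: (Vr) => U0 oU0 [nuU0 r0 _].
have rgt0 : (0 < r)%R.
  rewrite lt_neqAle -lee_fin r_ge0 andbT; apply/eqP => e.
  by move: r0; rewrite -e => /eqP; apply.
pose G := [set V | open V /\ nu (V `&` U0) = 0].
pose W := \bigcup_(V in G) V.
pose C := ~` W.
have oW : open W by apply: bigcup_open => V [].
have nuW : nu (W `&` U0) = 0.
  pose F' := [set V `&` U0 | V in G].
  have oF' : open (\bigcup_(X in F') X) by apply: bigcup_open => _ [V [oV _] <-]; exact: openI.
  have dF' : directed_opens F'.
    split; first by move=> _ [V [oV _] <-]; exact: openI.
    split; first by exists (set0 `&` U0); exists set0 => //; split; [exact: open0|rewrite set0I].
    move=> _ _ [V1 [oV1 h1] <-] [V2 [oV2 h2] <-].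
    exists ((V1 `|` V2) `&` U0); last by rewrite setIUl.
    exists (V1 `|` V2) => //; split; first exact: openU.
    have := numod (V1 `&` U0) (V2 `&` U0) (openI oV1 oU0) (openI oV2 oU0).
    rewrite h1 h2 adde0 -setIUl => /esym e.
    apply: le_anti; rewrite nuge0 ?andbT; last by apply: openI => //; exact: openU.
    rewrite -e leeDl // nuge0 //; apply: openI; exact: openI.
  apply: le_anti; rewrite nuge0 ?andbT; last exact: openI.
  apply: (le_trans (numono _ _ (openI oW oU0) oF' _)).
    by move=> x [[V GV Vx] U0x]; exists (V `&` U0) => //; exists V.
  rewrite (nucont _ dF'); apply: ge_ereal_sup => _ [_ [V [_ h] <-] <-].
  by rewrite h.
have key : forall U, open U ->
   (U `&` C !=set0 /\ nu (U `&` U0) = r%:E) \/ (~ (U `&` C !=set0) /\ nu (U `&` U0) = 0).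
  move=> U oU; case: (pselect (U `&` C !=set0)) => h; [left|right]; split => //.
  - have le1 : nu (U `&` U0) <= r%:E by rewrite -nuU0; apply: numono; [exact: openI|done|exact: subIsetr].
    have ge0 : 0 <= nu (U `&` U0) by apply: nuge0; exact: openI.
    have ne0 : nu (U `&` U0) != 0.
      apply/eqP => e; case: h => x [Ux Cx]; apply: Cx; exists U => //.
    apply: le_anti; rewrite le1 /=; apply: rmin; exists (U `&` U0); first exact: openI.
    split => //; by apply/eqP => e; move: le1; rewrite e leye_eq.
  - have sUW : U `<=` W by move=> x Ux; apply: contrapT => nWx; apply: h; exists x.
    apply: le_anti; rewrite nuge0 ?andbT; last exact: openI.
    rewrite -nuW; apply: numono; [exact: openI|exact: openI|].
    by move=> x [Ux U0x]; split => //; exact: sUW.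
have meetI : forall U V, open U -> open V -> U `&` C !=set0 -> V `&` C !=set0 ->
    (U `&` V) `&` C !=set0.
  move=> U V oU oV hU hV.
  have [[_ eU]|[]//] := key U oU.
  have [[_ eV]|[]//] := key V oV.
  have [[]//|[_ eUV]] := key _ (openI oU oV).
  exfalso.
  have := numod _ _ (openI oU oU0) (openI oV oU0).
  rewrite eU eV setIACA setIid eUV adde0 => e.
  have : nu ((U `&` U0) `|` (V `&` U0)) <= r%:E.
    rewrite -nuU0; apply: numono; [by apply: openU; exact: openI|done|].
    by move=> x [[]|[]].
  rewrite -e -EFinD lee_fin; move: rgt0; lra.

have geR : forall U, open U -> U `&` C !=set0 -> r%:E <= nu U.
  move=> U oU hU; have [[_ e]|[]//] := key U oU.
  by rewrite -e; apply: numono; [exact: openI|done|exact: subIsetl].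
have nu'mono : forall U V, open U -> open V -> U `<=` V ->
    val_sub nu r%:E C U <= val_sub nu r%:E C V.
  move=> U V oU oV UV; rewrite /val_sub /e_pt.
  case: pselect => hU; case: pselect => hV; rewrite ?mule1 ?mule0 ?sube0.
  - by apply: leeB => //; exact: numono.
  - by exfalso; apply: hV; case: hU => x [Ux Cx]; exists x; split => //; exact: UV.
  - rewrite leeBrDr //.
    have [[]//|[_ eU]] := key U oU.
    have [[_ eV]|[]//] := key V oV.
    have oVU0 := openI oV oU0.
    have := numod _ _ oU oVU0.
    have -> : nu (U `&` (V `&` U0)) = 0.
      apply: le_anti; rewrite nuge0 ?andbT; last by apply: openI.
      rewrite -eU; apply: numono; [by apply: openI|exact: openI|].
      by move=> x [Ux [_ U0x]].
    rewrite eV adde0 => ->; apply: numono => //; first exact: openU.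
    by move=> x [Ux|[]]; [apply: UV|].
  - exact: numono.
have nu'ge0 : forall U, open U -> 0 <= val_sub nu r%:E C U.
  move=> U oU; rewrite /val_sub /e_pt; case: pselect => h.
  - by rewrite mule1 sube_ge0 //; exact: geR.
  - by rewrite mule0 sube0; exact: nuge0.
exists C; split.
- exact: open_closedC.
- split.
  + have [[h _]|[_ e]] := key U0 oU0.
      by case: h => x [_ Cx]; exists x.
    by move: r0; rewrite -nuU0 -{1}(setIid U0) e eqxx.
  + move=> A B cA cB CAB.
    case: (pselect (C `<=` A)) => hA; first by left.
    case: (pselect (C `<=` B)) => hB; first by right.
    exfalso.
    have [x [Cx nAx]] : exists x, C x /\ ~ A x.
      by move/existsNP: hA => [x /not_implyP]; exists x.
    have [y [Cy nBy]] : exists y, C y /\ ~ B y.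
      by move/existsNP: hB => [y /not_implyP]; exists y.
    have [z [[nAz nBz] Cz]] := meetI _ _ (closed_openC cA) (closed_openC cB)
       (ex_intro _ x (conj nAx Cx)) (ex_intro _ y (conj nBy Cy)).
    by case: (CAB z Cz).
- split.
  + rewrite /val_sub /e_pt; case: pselect => [h|h]; first by case: h => x [[] _].
    by rewrite mule0 sube0 nu0.
  + exact: nu'ge0.
  + exact: nu'mono.
  + move=> U V oU oV; rewrite /val_sub.
    rewrite addeACA (numod U V oU oV) [in RHS]addeACA; congr (_ + _).
    have f1 : U `&` C !=set0 -> (U `|` V) `&` C !=set0.
      by case=> x [Ux Cx]; exists x; split => //; left.
    have f2 : V `&` C !=set0 -> (U `|` V) `&` C !=set0.
      by case=> x [Ux Cx]; exists x; split => //; right.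
    have f3 : (U `|` V) `&` C !=set0 -> U `&` C !=set0 \/ V `&` C !=set0.
      by case=> x [[Ux|Vx] Cx]; [left|right]; exists x.
    have f4 : (U `&` V) `&` C !=set0 -> U `&` C !=set0.
      by case=> x [[Ux _] Cx]; exists x.
    have f5 : (U `&` V) `&` C !=set0 -> V `&` C !=set0.
      by case=> x [[_ Vx] Cx]; exists x.
    have f6 := meetI U V oU oV.
    rewrite /e_pt; case: pselect => hU; case: pselect => hV;
      case: pselect => hUV; case: pselect => hIV;
      rewrite ?mule1 ?mule0 //; try (exfalso; tauto).
    by rewrite addeC.
  + move=> F dF.
    have oF : forall U, F U -> open U by case: dF.
    have oB : open (\bigcup_(U in F) U) by exact: bigcup_open.
    apply: le_anti; apply/andP; split; last first.
      apply: ge_ereal_sup => _ [U FU <-]; apply: nu'mono => //; first exact: oF.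
      by move=> x Ux; exists U.
    case: (pselect ((\bigcup_(U in F) U) `&` C !=set0)) => hB.
    * have [x [[U1 FU1 U1x] Cx]] := hB.
      rewrite /val_sub /e_pt; case: pselect => [hh|hh]; last by exfalso; apply: hh.
      rewrite mule1 (nucont F dF) leeBlDr //.
      apply: ge_ereal_sup => _ [U FU <-].
      have [_ [_ dir]] := dF.
      have [W' FW' sW'] := dir U U1 FU FU1.
      have hW' : W' `&` C !=set0 by exists x; split => //; apply: sW'; right.
      apply: (le_trans (numono _ _ (oF U FU) (oF W' FW') _)).
        by move=> y Uy; apply: sW'; left.
      have -> : nu W' = val_sub nu r%:E C W' + r%:E.
        by rewrite /val_sub /e_pt; case: pselect => [hh2|hh2]; [by rewrite mule1 subeK|by exfalso; apply: hh2].
      apply: leeD2r; apply: ereal_sup_ubound; exists W' => //.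
    * rewrite /val_sub /e_pt; case: pselect => [hh|hh]; first by exfalso; apply: hB.
      rewrite mule0 sube0 (nucont F dF).
      apply: ge_ereal_sup => _ [U FU <-].
      have -> : nu U = val_sub nu r%:E C U.
        rewrite /val_sub /e_pt; case: pselect => [[x [Ux Cx]]|hh3].
          by exfalso; apply: hB; exists x; split => //; exists U.
        by rewrite mule0 sube0.
      by apply: ereal_sup_ubound; exists U.
- move=> v [U oU [hv v0 voo]].
  have v_ge0 : 0 <= v by rewrite -hv; exact: nu'ge0.
  move: hv v0 voo v_ge0; case: v => [b| |] //.
  move=> hv b0 _ b_ge0.
  move: hv; rewrite /val_sub /e_pt; case: pselect => h.
  + rewrite mule1.
    have := geR U oU h.
    case E: (nu U) => [a| |] // ra hv.
    move: hv => [hv].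
    exists a%:E; last by rewrite -EFinB hv.
    split.
    * exists U => //; split => //.
      by rewrite eqe; apply/eqP => a0; move: ra; rewrite a0 lee_fin; lra.
    * by rewrite eqe; apply/eqP => ar; move: b0; rewrite -hv ar subrr eqxx.
  + rewrite mule0 sube0 => hv.
    have [[]//|[_ eU]] := key U oU.
    have := numod _ _ oU oU0.
    rewrite eU hv nuU0 adde0 -EFinD => e.
    exists (b + r)%R%:E; last by rewrite -EFinB addrK.
    split.
    * exists (U `|` U0); first exact: openU.
      split => //.
      by rewrite eqe; apply/eqP => a0; move: rgt0 b_ge0; rewrite lee_fin; lra.
    * rewrite eqe; apply/eqP => ar; move: b0; rewrite eqe; apply/negP; rewrite negbK.
      by apply/eqP; lra.
Qed.
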